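(* Let $b\ge 1$, $k\ge 1$ and $1\le s\le k$ be integers. Then for every integer $t$, $$\sigma^{(b)}_{k}(t;s)=\frac{1}{k}\sum_{\xi\in\Delta_{k}}(\xi)_{s-1}\,\xi^{-t},$$ where $\Delta_k=\{e^{2\pi i h/k}: 1\le h\le k,\ \gcd(h,k)=1\}$ is the set of primitive $k$-th roots of unity and $(\xi)_{s-1}=(1-\xi)(1-\xi^2)\cdots(1-\xi^{s-1})$.
   Context: For a positive integer $m$, $(q)_m=(1-q)\cdots(1-q^m)$, $(q)_0=1$. For integers $b\ge 0$, $k\ge1$ and $1\le s\le k$, let $R^{(b)}_{k,s}(q)=\sum_{t=0}^{k-1}\sigma^{(b)}_k(t;s)q^t$ be the remainder of $\frac{1}{k^b}(q)_{k-1}^{\,b}(q)_{s-1}$ upon division by $1-q^k$; the values $\sigma^{(b)}_k(t;s)$ are extended to all integers $t$ by $k$-periodicity. *)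

(* Defs.v *)
From HB Require Import structures.
From mathcomp Require Import all_boot all_order all_algebra all_field.
Set Implicit Arguments. Unset Strict Implicit. Unset Printing Implicit Defensive.
Import Order.TTheory GRing.Theory Num.Theory.
Local Open Scope ring_scope.

Definition qpoch_poly (m : nat) : {poly algC} :=
  \prod_(1 <= i < m.+1) (1 - 'X^i).

Definition qpoch (x : algC) (m : nat) : algC :=
  \prod_(1 <= i < m.+1) (1 - x ^+ i).

Definition Rpoly (b k s : nat) : {poly algC} :=
  ((k%:R ^+ b)^-1 *: (qpoch_poly k.-1 ^+ b * qpoch_poly s.-1)) %% (1 - 'X^k).

(* sigma^{(b)}_k(t;s): coefficient of q^(t mod k), i.e. extended k-periodically *)
Definition sigma (b k s : nat) (t : int) : algC :=
  (Rpoly b k s)`_(absz (t %% k%:Z)%Z).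

(* Main.v *)
Require Import Defs.
From HB Require Import structures.
From mathcomp Require Import all_boot all_order all_algebra all_field.
Import Order.TTheory GRing.Theory Num.Theory.
Local Open Scope ring_scope.

Lemma geo_sum (w : algC) k : (0 < k)%N -> w ^+ k = 1 ->
  \sum_(j < k) w ^+ j = if w == 1 then k%:R else 0.
Proof.
move=> k0 wk; case: eqP => [->|/eqP w1].
  by rewrite (eq_bigr (fun _ => 1)) ?sumr_const ?card_ord // => i _; rewrite expr1n.
have := subrX1 w k; rewrite wk subrr => /esym/eqP; rewrite mulf_eq0 subr_eq0 (negbTE w1) /=.
by move/eqP.
Qed.

Lemma dft (R : {poly algC}) k z m : (0 < k)%N -> k.-primitive_root z ->
  (size R <= k)%N -> (m < k)%N ->
  R`_m = k%:R^-1 * \sum_(j < k) R.[z ^+ j] * (z ^+ j ^+ m)^-1.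
Proof.
move=> k0 pz sR mk.
have z0 : z != 0.
  apply/eqP=> z0; have := prim_expr_order pz; rewrite z0 expr0n.
  by rewrite eqn0Ngt k0 /= => /eqP; rewrite eq_sym oner_eq0.
have E i j : (z ^+ j) ^+ i * ((z ^+ j) ^+ m)^-1 = (z ^+ i / z ^+ m) ^+ j.
  by rewrite exprMn exprVn -!exprM mulnC (mulnC m j).
under eq_bigr => j _ do rewrite (horner_coef_wide _ sR) mulr_suml.
rewrite exchange_big /=.
under eq_bigr => i _.
  under eq_bigr => j _ do rewrite -mulrA E.
  rewrite -mulr_sumr geo_sum //; last first.
    by rewrite exprMn exprVn -!exprM mulnC exprM (prim_expr_order pz) expr1n
       mulnC exprM (prim_expr_order pz) expr1n invr1 mulr1.
  rewrite (_ : (_ == 1) = (i == m :> nat)); last first.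
    have ym : z ^+ m != 0 by rewrite expf_neq0.
    rewrite -(divff ym) eqr_div // (inj_eq (mulIf ym)).
    by rewrite (eq_prim_root_expr pz) !modn_small.
  over.
rewrite (bigD1 (Ordinal mk)) //= eqxx big1 ?addr0; last first.
  by move=> i /negbTE; rewrite -val_eqE /= => ->; rewrite mulr0.
by rewrite mulrC -mulrA divff ?mulr1 // pnatr_eq0 -lt0n.
Qed.

Lemma qpoch_polyE m x : (qpoch_poly m).[x] = qpoch x m.
Proof.
by rewrite /qpoch_poly horner_prod; apply: eq_bigr => i _; rewrite !hornerE.
Qed.

Lemma qpoch_full k z j : (0 < k)%N -> k.-primitive_root z -> (j < k)%N ->
  qpoch (z ^+ j) k.-1 = if coprime j k then k%:R else 0.
Proof.
move=> k0 pz jk; case: ifP => cop.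
  rewrite -(prim_root_exp_coprime j pz) in cop.
  set w := z ^+ j in cop *.
  have F := factor_Xn_sub_1 cop.
  case: k k0 pz jk cop F => // k' _ _ _ cop F.
  rewrite big_nat_recl // expr0 subrX1 polyC1 in F.
  have X1 : ('X - 1 : {poly algC}) != 0 by rewrite -polyC1 polyXsubC_eq0.
  move/(mulfI X1): F => /(congr1 (horner^~ 1)).
  rewrite horner_prod horner_sum => H.
  rewrite /qpoch big_add1 /=.
  have <- : \sum_(i < k'.+1) ('X^i : {poly algC}).[1] = k'.+1%:R.
    under eq_bigr do rewrite hornerXn expr1n.
    by rewrite sumr_const card_ord.
  rewrite -H; apply: eq_bigr => i _; rewrite !hornerE.
  done.
set g := gcdn j k.
have g1 : g != 1%N by rewrite /g; apply/negbT: cop.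
have gk : (g %| k)%N by apply: dvdn_gcdr.
have g0 : (0 < g)%N by rewrite gcdn_gt0 k0 orbT.
have g2 : (1 < g)%N by case: g g1 g0 {gk} => [|[|]].
set d := (k %/ g)%N.
have d0 : (0 < d)%N by rewrite divn_gt0 // dvdn_leq.
have dk : (d < k)%N by apply: ltn_Pdiv.
have kd : (k %| j * d)%N.
  rewrite /d -{1}(divnK (dvdn_gcdl j k)) -/g -mulnA (mulnC g) divnK //.
  exact: dvdn_mull.
apply/eqP; rewrite /qpoch prodf_seq_eq0; apply/hasP; exists d.
  by rewrite mem_index_iota d0 prednK.
by rewrite (prim_order_dvd pz) in kd; rewrite -exprM (eqP kd) subrr eqxx.
Qed.


Lemma expz_mod (w : algC) k (t : int) : (0 < k)%N -> w ^+ k = 1 ->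
  w ^ (- t) = (w ^+ absz (t %% k%:Z)%Z)^-1.
Proof.
move=> k0 wk.
have w0 : w != 0.
  apply/eqP=> w0; move: wk; rewrite w0 expr0n eqn0Ngt k0 /= => /eqP.
  by rewrite eq_sym oner_eq0.
have r0 : (0 <= (t %% k%:Z)%Z) by rewrite modz_ge0 // eqz_nat -lt0n.
rewrite {1}(divz_eq t k%:Z) opprD expfzDr // -mulNr mulrC -exprz_exp.
have -> : (w ^ (- (t %/ k)%Z)) ^ k = 1.
  by rewrite exprz_exp mulrC -exprz_exp; change ((w ^+ k) ^ (- (t %/ k)%Z) = 1); rewrite wk exp1rz.
rewrite mulr1 -{1}(gez0_abs r0) exprnN.
by [].
Qed.

Theorem lemma2p4 (b k s : nat) (t : int) (z : algC) :
  (1 <= b)%N -> (1 <= k)%N -> (1 <= s <= k)%N ->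
  k.-primitive_root z ->
  sigma b k s t =
  k%:R^-1 * \sum_(1 <= h < k.+1 | coprime h k)
              qpoch (z ^+ h) s.-1 * (z ^+ h) ^ (- t).
Proof.
move=> b1 k0 _ pz.
set m := absz (t %% k%:Z)%Z.
have r0 : (0 <= (t %% k%:Z)%Z) by rewrite modz_ge0 // eqz_nat -lt0n.
have mk : (m < k)%N.
  by rewrite -ltz_nat /m gez0_abs // ltz_pmod.
set P := (k%:R ^+ b)^-1 *: (qpoch_poly k.-1 ^+ b * qpoch_poly s.-1).
set d := (1 - 'X^k : {poly algC}).
have sd : size d = k.+1.
  by rewrite /d -opprB size_opp -polyC1 size_XnsubC.
have sR : (size (Rpoly b k s) <= k)%N.
  rewrite -ltnS -sd; apply: ltn_modpN0; by rewrite -size_poly_eq0 sd.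
rewrite /sigma -/m (dft _ _ _ _ k0 pz sR mk).
congr (_ * _).
have kz : k%:R != 0 :> algC by rewrite pnatr_eq0 -lt0n.
have HR j : (j < k)%N -> (Rpoly b k s).[z ^+ j] =
   if coprime j k then qpoch (z ^+ j) s.-1 else 0.
  move=> jk.
  have -> : (Rpoly b k s).[z ^+ j] = P.[z ^+ j].
    rewrite /Rpoly -/P -/d {2}(divp_eq P d) hornerD hornerM.
    have -> : d.[z ^+ j] = 0.
      by rewrite /d !hornerE exprAC (prim_expr_order pz) expr1n subrr.
    by rewrite mulr0 add0r.
  rewrite /P hornerZ hornerM horner_exp !qpoch_polyE (qpoch_full _ _ _ k0 pz jk).
  case: ifP => _; last by rewrite expr0n eqn0Ngt b1 /= mul0r mulr0.
  by rewrite mulrA mulVf ?mul1r // expf_neq0.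
pose G j := if coprime j k then qpoch (z ^+ j) s.-1 * ((z ^+ j) ^+ m)^-1 else 0.
rewrite (eq_bigr (fun j : 'I_k => G j)); last first.
  by move=> j _; rewrite HR // /G; case: ifP => _ //; rewrite mul0r.
rewrite -(big_mkord xpredT G) [RHS]big_mkcond /=.
rewrite [RHS](eq_bigr G); last first.
  move=> h _; rewrite /G; case: ifP => _ //.
  rewrite (expz_mod _ _ _ k0) //.
  by rewrite exprAC (prim_expr_order pz) expr1n.
have Gk : G 0%N = G k by rewrite /G /coprime gcd0n gcdnn expr0 (prim_expr_order pz).
rewrite -[in LHS](prednK k0) big_nat_recl // big_add1 /=.
rewrite -[in RHS](prednK k0) big_nat_recr //= prednK // Gk addrC.
done.
Qed.
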